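(* Let $m>0$, let $f(r,z)$ be a smooth function on $[\tfrac m2,\infty)\times[-1,1]$, $J,c$ constants, and $\omega=f(1-z^2)^2+J(z^3-3z)+c$ with $z=\cos\theta$. Set $K_{\varphi\theta}=\omega_{,r}/\sin\theta$, $K_{\varphi r}=-\omega_{,\theta}/(r^2\sin\theta)$, and $$P_J=2\int_{m/2}^\infty dr\,\varrho(r)\,r\int_{-1}^1\big(K_{\varphi\theta}^2+r^2K_{\varphi r}^2\big)\frac{dz}{1-z^2},\qquad \varrho(r)=\frac{m(1-\frac m{2r})}{4r^3(1+\frac m{2r})^7}.$$ Then for each $r$, $\int_{-1}^1\frac{\omega_{,z}^2}{1-z^2}dz=\int_{-1}^1\frac{\tilde\omega_{,z}^2}{1-z^2}dz+12J^2$ where $\tilde\omega=f(1-z^2)^2$, and consequently $$P_J\ge\frac{J^2}{4m^2},$$ with equality if and only if $f\equiv0$. *)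

(* Defs.v *)
From Stdlib Require Import Reals Lra ClassicalEpsilon.
Open Scope R_scope.

Definition cont2 (g : R -> R -> R) : Prop :=
  forall x y eps, 0 < eps -> exists d, 0 < d /\
    forall x' y', Rabs (x' - x) < d -> Rabs (y' - y) < d ->
      Rabs (g x' y' - g x y) < eps.

(* C^infinity on R^2: D i j = d^i/dx^i d^j/dy^j f, all exist and are
   jointly continuous. *)
Definition smooth2 (f : R -> R -> R) : Prop :=
  exists D : nat -> nat -> R -> R -> R,
    (forall x y, D 0%nat 0%nat x y = f x y) /\
    forall i j, cont2 (D i j) /\
      forall x y,
        derivable_pt_lim (fun s => D i j s y) x (D (S i) j x y) /\
        derivable_pt_lim (fun t => D i j x t) y (D i (S j) x y).

Definition partial1 (W : R -> R -> R) (x y : R) : R :=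
  epsilon (inhabits 0) (fun d => derivable_pt_lim (fun s => W s y) x d).
Definition partial2 (W : R -> R -> R) (x y : R) : R :=
  epsilon (inhabits 0) (fun d => derivable_pt_lim (fun t => W x t) y d).

Definition is_RInt (g : R -> R) (a b v : R) : Prop :=
  exists pr : Riemann_integrable g a b, RiemannInt pr = v.
Definition RInt (g : R -> R) (a b : R) : R :=
  epsilon (inhabits 0) (fun v => is_RInt g a b v).

Definition improper_int (h : R -> R) (a l : R) : Prop :=
  (forall b, a <= b -> exists v, is_RInt h a b v) /\
  (forall eps, 0 < eps -> exists B, forall b v,
      B <= b -> is_RInt h a b v -> Rabs (v - l) < eps).

Definition omega (f : R -> R -> R) (J c : R) (r z : R) : R :=
  f r z * (1 - z ^ 2) ^ 2 + J * (z ^ 3 - 3 * z) + c.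
Definition omega_tilde (f : R -> R -> R) (r z : R) : R :=
  f r z * (1 - z ^ 2) ^ 2.
Definition omega_th (f : R -> R -> R) (J c : R) (r th : R) : R :=
  omega f J c r (cos th).

(* K_{phi theta} = omega_{,r} / sin theta,
   K_{phi r} = - omega_{,theta} / (r^2 sin theta),  at theta = acos z. *)
Definition K_phitheta f J c (r z : R) : R :=
  partial1 (omega_th f J c) r (acos z) / sin (acos z).
Definition K_phir f J c (r z : R) : R :=
  - partial2 (omega_th f J c) r (acos z) / (r ^ 2 * sin (acos z)).

Definition rho (m r : R) : R :=
  m * (1 - m / (2 * r)) / (4 * r ^ 3 * (1 + m / (2 * r)) ^ 7).

Definition PJ_integrand (m J c : R) (f : R -> R -> R) (r : R) : R :=
  2 * rho m r * r *
  RInt (fun z => (K_phitheta f J c r z ^ 2 + r ^ 2 * K_phir f J c r z ^ 2)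
                   / (1 - z ^ 2)) (-1) 1.

(* Main.v *)
Require Import Defs.
From Stdlib Require Import Reals Lra ClassicalEpsilon.
From Coquelicot Require Coquelicot.
Open Scope R_scope.

Module Aux.
Import Coquelicot.Coquelicot.

Lemma iru (g : R -> R) a b (l : R) : is_RInt g a b l -> RInt g a b = l.
Proof. exact (is_RInt_unique g a b l). Qed.

Lemma bridge g a b v : Defs.is_RInt g a b v <-> is_RInt g a b v.
Proof.
split.
- intros [pr Hpr]. pose proof (ex_RInt_Reals_1 _ _ _ pr) as Hex.
  pose proof (RInt_Reals g a b pr) as E. rewrite Hpr in E. rewrite <- E. exact (RInt_correct g a b Hex).
- intros H. exists (ex_RInt_Reals_0 _ _ _ (ex_intro _ v H)).
  rewrite <- RInt_Reals. now apply iru.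
Qed.

Lemma RInt_val g a b v : is_RInt g a b v -> Defs.RInt g a b = v.
Proof.
intros H. unfold Defs.RInt.
pose proof (epsilon_spec (inhabits 0) (fun v => Defs.is_RInt g a b v) (ex_intro _ v (proj2 (bridge _ _ _ _) H))) as Hs.
apply bridge in Hs. apply iru in Hs. apply iru in H. congruence.
Qed.

Lemma partial2_eq W x y d : derivable_pt_lim (fun t => W x t) y d -> partial2 W x y = d.
Proof.
intros H. unfold partial2.
pose proof (epsilon_spec (inhabits 0) (fun d => derivable_pt_lim (fun t => W x t) y d) (ex_intro _ d H)) as Hs.
exact (uniqueness_limite _ _ _ _ Hs H).
Qed.

Lemma partial1_eq W x y d : derivable_pt_lim (fun s => W s y) x d -> partial1 W x y = d.
Proof.
intros H. unfold partial1.
pose proof (epsilon_spec (inhabits 0) (fun d => derivable_pt_lim (fun s => W s y) x d) (ex_intro _ d H)) as Hs.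
exact (uniqueness_limite _ _ _ _ Hs H).
Qed.

Lemma exdc (g : R -> R) x : ex_derive g x -> continuous g x.
Proof. intros H. apply (ex_derive_continuous (K:=R_AbsRing) (V:=R_NormedModule)). exact H. Qed.

Definition Dspec (f : R -> R -> R) (D : nat -> nat -> R -> R -> R) :=
  (forall x y, D 0%nat 0%nat x y = f x y) /\
    forall i j x y,
        derivable_pt_lim (fun s => D i j s y) x (D (S i) j x y) /\
        derivable_pt_lim (fun t => D i j x t) y (D i (S j) x y).

Lemma dz f D (HD : Dspec f D) i j x y : is_derive (fun t => D i j x t) y (D i (S j) x y).
Proof. apply is_derive_Reals. apply (proj2 HD). Qed.
Lemma dr f D (HD : Dspec f D) i j x y : is_derive (fun s => D i j s y) x (D (S i) j x y).
Proof. apply is_derive_Reals. apply (proj2 HD). Qed.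
Lemma fz f D (HD : Dspec f D) x y : is_derive (fun t => f x t) y (D 0%nat 1%nat x y).
Proof. eapply is_derive_ext; [|apply (dz f D HD)]. intros t; simpl; apply (proj1 HD). Qed.
Lemma fr f D (HD : Dspec f D) x y : is_derive (fun s => f s y) x (D 1%nat 0%nat x y).
Proof. eapply is_derive_ext; [|apply (dr f D HD)]. intros t; simpl; apply (proj1 HD). Qed.
Lemma cz f D (HD : Dspec f D) i j x y : continuous (fun t => D i j x t) y.
Proof. apply exdc. eexists; apply (dz f D HD). Qed.
Lemma cr f D (HD : Dspec f D) i j x y : continuous (fun s => D i j s y) x.
Proof. apply exdc. eexists; apply (dr f D HD). Qed.
Lemma cfz f D (HD : Dspec f D) x y : continuous (fun t => f x t) y.
Proof. apply exdc. eexists; apply (fz f D HD). Qed.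
Lemma cfr f D (HD : Dspec f D) x y : continuous (fun s => f s y) x.
Proof. apply exdc. eexists; apply (fr f D HD). Qed.

Definition qt (f : R -> R -> R) (D : nat -> nat -> R -> R -> R) (x y : R) := D 0%nat 1%nat x y * (1 - y^2) - 4 * y * f x y.

Lemma d_omega f D (HD : Dspec f D) J c x y :
  derivable_pt_lim (fun t => omega f J c x t) y ((1 - y^2) * (qt f D x y - 3 * J)).
Proof.
apply is_derive_Reals. unfold omega.
pose proof (fz f D HD x y) as H.
auto_derive.
- eexists; exact H.
- rewrite (is_derive_unique (fun t : R => f x t) y _ H). unfold qt. ring.
Qed.

Lemma d_omega_tilde f D (HD : Dspec f D) x y :
  derivable_pt_lim (fun t => omega_tilde f x t) y ((1 - y^2) * qt f D x y).
Proof.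
apply is_derive_Reals. unfold omega_tilde.
pose proof (fz f D HD x y) as H.
auto_derive.
- eexists; exact H.
- rewrite (is_derive_unique (fun t : R => f x t) y _ H). unfold qt. ring.
Qed.

Lemma d_omth1 f D (HD : Dspec f D) J c x th :
  derivable_pt_lim (fun s => omega_th f J c s th) x (D 1%nat 0%nat x (cos th) * (1 - cos th ^ 2) ^ 2).
Proof.
apply is_derive_Reals. unfold omega_th, omega.
pose proof (fr f D HD x (cos th)) as H.
auto_derive.
- eexists; exact H.
- rewrite (is_derive_unique (fun s : R => f s (cos th)) x _ H). ring.
Qed.

Lemma d_omth2 f D (HD : Dspec f D) J c x th :
  derivable_pt_lim (fun t => omega_th f J c x t) th
    ((1 - cos th ^ 2) * (qt f D x (cos th) - 3 * J) * (- sin th)).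
Proof.
apply is_derive_Reals. unfold omega_th.
pose proof (d_omega f D HD J c x (cos th)) as H. apply is_derive_Reals in H.
pose proof (is_derive_comp (fun u => omega f J c x u) cos th _ _ H (is_derive_cos th)) as H2.
replace ((1 - cos th ^ 2) * (qt f D x (cos th) - 3 * J) * - sin th) with
  (scal (- sin th) ((1 - cos th ^ 2) * (qt f D x (cos th) - 3 * J))).
- exact H2.
- unfold scal; simpl; unfold mult; simpl; ring.
Qed.

Lemma sq_acos z : -1 < z < 1 -> sin (acos z) * sin (acos z) = 1 - z ^ 2 /\ 0 < sin (acos z).
Proof.
intros Hz. rewrite sin_acos by lra.
assert (0 < 1 - z²) by (unfold Rsqr; nra).
split. - rewrite sqrt_sqrt by lra. unfold Rsqr; ring. - apply sqrt_lt_R0; lra.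
Qed.

Lemma inner_eq f D (HD : Dspec f D) J c x z : x <> 0 -> -1 < z < 1 ->
  (K_phitheta f J c x z ^ 2 + x ^ 2 * K_phir f J c x z ^ 2) / (1 - z ^ 2)
  = D 1%nat 0%nat x z ^ 2 * (1 - z ^ 2) ^ 2 + / x ^ 2 * ((1 - z ^ 2) * (qt f D x z - 3 * J) ^ 2).
Proof.
intros Hx Hz. unfold K_phitheta, K_phir.
rewrite (partial1_eq _ _ _ _ (d_omth1 f D HD J c x (acos z))).
rewrite (partial2_eq _ _ _ _ (d_omth2 f D HD J c x (acos z))).
rewrite cos_acos by lra.
destruct (sq_acos z Hz) as [E P].
set (s := sin (acos z)) in *. rewrite <- E. field. lra.
Qed.

Lemma A_eq f D (HD : Dspec f D) J c x z : -1 < z < 1 ->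
  partial2 (omega f J c) x z ^ 2 / (1 - z ^ 2) = (1 - z ^ 2) * (qt f D x z - 3 * J) ^ 2.
Proof.
intros Hz. rewrite (partial2_eq _ _ _ _ (d_omega f D HD J c x z)). field. nra.
Qed.

Lemma B_eq f D (HD : Dspec f D) x z : -1 < z < 1 ->
  partial2 (omega_tilde f) x z ^ 2 / (1 - z ^ 2) = (1 - z ^ 2) * qt f D x z ^ 2.
Proof.
intros Hz. rewrite (partial2_eq _ _ _ _ (d_omega_tilde f D HD x z)). field. nra.
Qed.

Lemma ex_qt f D (HD : Dspec f D) x z : ex_derive (fun t => qt f D x t) z.
Proof.
unfold qt. pose proof (fz f D HD x z). pose proof (dz f D HD 0 1 x z).
auto_derive. split; [eexists; eauto | split; [eexists; eauto| auto]].
Qed.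

Lemma ex_D10 f D (HD : Dspec f D) x z : ex_derive (fun t => D 1%nat 0%nat x t) z.
Proof. eexists; apply (dz f D HD). Qed.

Lemma exRc (g : R -> R) a b : (forall z, Rmin a b <= z <= Rmax a b -> continuous g z) -> ex_RInt g a b.
Proof. apply (ex_RInt_continuous (V:=R_CompleteNormedModule)). Qed.
Lemma RIc (g : R -> R) a b : ex_RInt g a b -> is_RInt g a b (RInt g a b).
Proof. apply (RInt_correct (V:=R_CompleteNormedModule)). Qed.

Lemma isRd (F df : R -> R) a b :
  (forall x, Rmin a b <= x <= Rmax a b -> is_derive F x (df x)) ->
  (forall x, Rmin a b <= x <= Rmax a b -> continuous df x) ->
  is_RInt df a b (F b - F a).
Proof. intros H1 H2. exact (is_RInt_derive (V:=R_CompleteNormedModule) F df a b H1 H2). Qed.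

Definition Av (D : nat -> nat -> R -> R -> R) (x : R) := RInt (fun z => D 1%nat 0%nat x z ^ 2 * (1 - z ^ 2) ^ 2) (-1) 1.
Definition Bv (f : R -> R -> R) (D : nat -> nat -> R -> R -> R) (x : R) := RInt (fun z => (1 - z ^ 2) * qt f D x z ^ 2) (-1) 1.

Lemma exA f D (HD : Dspec f D) x a b : ex_RInt (fun z => D 1%nat 0%nat x z ^ 2 * (1 - z ^ 2) ^ 2) a b.
Proof.
apply exRc. intros z _. apply exdc.
pose proof (ex_D10 f D HD x z). auto_derive; repeat split; auto.
Qed.

Lemma exB f D (HD : Dspec f D) x a b : ex_RInt (fun z => (1 - z ^ 2) * qt f D x z ^ 2) a b.
Proof.
apply exRc. intros z _. apply exdc.
pose proof (ex_qt f D HD x z). auto_derive; repeat split; auto.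
Qed.

Lemma I1 f D (HD : Dspec f D) x : is_RInt (fun z => (1 - z ^ 2) * qt f D x z) (-1) 1 0.
Proof.
replace 0 with (omega_tilde f x 1 - omega_tilde f x (-1)).
- apply (isRd (fun t => omega_tilde f x t)).
  + intros z _. apply is_derive_Reals. apply d_omega_tilde; auto.
  + intros z _. apply exdc. pose proof (ex_qt f D HD x z). auto_derive; repeat split; auto.
- unfold omega_tilde. ring.
Qed.

Lemma I2 : is_RInt (fun z => 1 - z ^ 2) (-1) 1 (4/3).
Proof.
assert (H : is_RInt (fun z => 1 - z ^ 2) (-1) 1 ((fun t => t - t^3/3) 1 - (fun t => t - t^3/3) (-1))).
{ apply (isRd (fun t => t - t^3/3) (fun z => 1 - z ^ 2)).
  + intros z _. auto_derive; auto. field.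
  + intros z _. apply exdc. auto_derive. auto. }
replace (4/3) with ((fun t => t - t^3/3) 1 - (fun t => t - t^3/3) (-1)). exact H.
simpl. field.
Qed.

Lemma I3 f D (HD : Dspec f D) J x :
  is_RInt (fun z => (1 - z ^ 2) * (qt f D x z - 3 * J) ^ 2) (-1) 1 (Bv f D x + 12 * J ^ 2).
Proof.
pose proof (RIc _ _ _ (exB f D HD x (-1) 1)) as HB.
pose proof (is_RInt_scal _ _ _ (-6 * J) _ (I1 f D HD x)) as H1.
pose proof (is_RInt_scal _ _ _ (9 * J ^ 2) _ I2) as H2.
pose proof (is_RInt_plus _ _ _ _ _ _ (is_RInt_plus _ _ _ _ _ _ HB H1) H2) as H.
unfold Bv. 
replace (RInt (fun z : R => (1 - z ^ 2) * qt f D x z ^ 2) (-1) 1 + 12 * J ^ 2) with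
  (plus (plus (RInt (fun z : R => (1 - z ^ 2) * qt f D x z ^ 2) (-1) 1) (scal (-6 * J) 0)) (scal (9 * J ^ 2) (4/3))).
- eapply is_RInt_ext; [| exact H]. intros z _. unfold plus, scal; simpl. unfold mult; simpl. ring.
- unfold plus, scal; simpl. unfold mult; simpl. field.
Qed.

Lemma isRle (g h : R -> R) a b Ig Ih : a <= b -> is_RInt g a b Ig -> is_RInt h a b Ih ->
  (forall x, a < x < b -> g x <= h x) -> Ig <= Ih.
Proof. apply is_RInt_le. Qed.

Lemma RCh (g : R -> R) a b c : ex_RInt g a b -> ex_RInt g b c -> RInt g a b + RInt g b c = RInt g a c.
Proof. intros. exact (RInt_Chasles (V:=R_CompleteNormedModule) g a b c H H0). Qed.

Lemma inner_int f D (HD : Dspec f D) J c x : x <> 0 ->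
  is_RInt (fun z => (K_phitheta f J c x z ^ 2 + x ^ 2 * K_phir f J c x z ^ 2) / (1 - z ^ 2)) (-1) 1
    (Av D x + / x ^ 2 * (Bv f D x + 12 * J ^ 2)).
Proof.
intros Hx.
pose proof (RIc _ _ _ (exA f D HD x (-1) 1)) as HA.
pose proof (is_RInt_scal _ _ _ (/ x ^ 2) _ (I3 f D HD J x)) as H3.
pose proof (is_RInt_plus _ _ _ _ _ _ HA H3) as H.
eapply is_RInt_ext; [| exact H].
intros z Hz. rewrite Rmin_left in Hz by lra. rewrite Rmax_right in Hz by lra.
rewrite inner_eq with (D := D) by auto. unfold plus, scal; simpl. unfold mult; simpl. reflexivity.
Qed.

Lemma PJ_val m J c f D (HD : Dspec f D) x : x <> 0 ->
  PJ_integrand m J c f x = 2 * rho m x * x * (Av D x + / x ^ 2 * (Bv f D x + 12 * J ^ 2)).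
Proof.
intros Hx. unfold PJ_integrand. rewrite (RInt_val _ _ _ _ (inner_int f D HD J c x Hx)). reflexivity.
Qed.

Lemma part1 f D (HD : Dspec f D) J c r :
     exists vA vB,
       Defs.is_RInt (fun z => partial2 (omega f J c) r z ^ 2 / (1 - z ^ 2)) (-1) 1 vA /\
       Defs.is_RInt (fun z => partial2 (omega_tilde f) r z ^ 2 / (1 - z ^ 2)) (-1) 1 vB /\
       vA = vB + 12 * J ^ 2.
Proof.
exists (Bv f D r + 12 * J ^ 2), (Bv f D r). split; [|split; [|reflexivity]]; apply bridge.
- eapply is_RInt_ext; [| exact (I3 f D HD J r)].
  intros z Hz. rewrite Rmin_left in Hz by lra. rewrite Rmax_right in Hz by lra.
  rewrite A_eq with (D := D) by auto. reflexivity.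
- eapply is_RInt_ext; [| exact (RIc _ _ _ (exB f D HD r (-1) 1))].
  intros z Hz. rewrite Rmin_left in Hz by lra. rewrite Rmax_right in Hz by lra.
  rewrite B_eq with (D := D) by auto. reflexivity.
Qed.

Lemma Av_ge0 f D (HD : Dspec f D) x : 0 <= Av D x.
Proof.
apply RInt_ge_0; [lra | apply (exA f D HD) | intros z _; apply Rmult_le_pos; apply pow2_ge_0].
Qed.

Lemma Bv_lb f D (HD : Dspec f D) x z0 : -1 < z0 < 1 ->
  omega_tilde f x z0 ^ 2 / (1 - z0) <= Bv f D x.
Proof.
intros Hz0. unfold Bv.
rewrite <- (RCh _ (-1) z0 1) by apply (exB f D HD).
assert (0 <= RInt (fun z : R => (1 - z ^ 2) * qt f D x z ^ 2) (-1) z0).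
{ apply RInt_ge_0; [lra | apply (exB f D HD) | intros z Hz; apply Rmult_le_pos; [nra | apply pow2_ge_0]]. }
set (w := omega_tilde f x z0). set (k := - w / (1 - z0)).
assert (HI : is_RInt (fun z => 2 * k * ((1 - z ^ 2) * qt f D x z) - k ^ 2) z0 1
          ((fun t => 2 * k * omega_tilde f x t - k ^ 2 * t) 1 - (fun t => 2 * k * omega_tilde f x t - k ^ 2 * t) z0)).
{ apply (isRd (fun t => 2 * k * omega_tilde f x t - k ^ 2 * t)).
  - intros z _. pose proof (d_omega_tilde f D HD x z) as Hd. apply is_derive_Reals in Hd.
    auto_derive. + eexists; exact Hd.
    + rewrite (is_derive_unique (fun t : R => omega_tilde f x t) z _ Hd). ring.
  - intros z _. apply exdc. pose proof (ex_qt f D HD x z). auto_derive; repeat split; auto. }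
pose proof (isRle _ _ _ _ _ _ (Rlt_le _ _ (proj2 Hz0)) HI (RIc _ _ _ (exB f D HD x z0 1))) as Hle.
assert (E : 2 * k * omega_tilde f x 1 - k ^ 2 * 1 - (2 * k * omega_tilde f x z0 - k ^ 2 * z0)
   = w ^ 2 / (1 - z0)).
{ fold w. unfold k, omega_tilde. field. lra. }
cbv beta in Hle. rewrite E in Hle.
enough (w ^ 2 / (1 - z0) <= RInt (fun z : R => (1 - z ^ 2) * qt f D x z ^ 2) z0 1) by lra.
apply Hle. intros z Hz. set (q := qt f D x z).
assert (0 < 1 - z ^ 2 <= 1) by nra.
set (u := 1 - z ^ 2) in *.
pose proof (pow2_ge_0 (u * q - k)).
assert (0 <= u * (1 - u) * q ^ 2) by (apply Rmult_le_pos; [nra | apply pow2_ge_0]).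
nra.
Qed.
End Aux.

Module Aux2.
Import Coquelicot.Coquelicot.
Import Aux.

Definition Fr (m r : R) := - (16 * m * r ^ 3) / (3 * (2 * r + m) ^ 6).
Definition g0 (m J r : R) := 24 * J ^ 2 * (16 * m * r ^ 2 * (2 * r - m) / (2 * r + m) ^ 7).
Definition g1 (m : R) (f : R -> R -> R) (z0 r : R) :=
  2 * rho m r * r * (/ r ^ 2 * (omega_tilde f r z0 ^ 2 / (1 - z0))).

Lemma g0_eq m J r : 0 < m -> 0 < r -> 2 * rho m r * r * (/ r ^ 2 * (12 * J ^ 2)) = g0 m J r.
Proof.
intros Hm Hr. unfold rho, g0.
field. split; lra.
Qed.

Lemma rho_ge0 m r : 0 < m -> m / 2 <= r -> 0 <= rho m r.
Proof.
intros Hm Hr. unfold rho.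
assert (0 < r) by lra.
assert (m / (2 * r) <= 1).
{ unfold Rdiv. apply (Rmult_le_reg_r (2 * r)); [lra|]. rewrite Rmult_assoc, Rinv_l by lra. lra. }
assert (0 < 1 + m / (2 * r)).
{ assert (0 < m / (2 * r)) by (apply Rdiv_lt_0_compat; lra). lra. }
apply Rmult_le_pos; [apply Rmult_le_pos; lra|].
apply Rlt_le, Rinv_0_lt_compat. apply Rmult_lt_0_compat; [|apply pow_lt; lra].
apply Rmult_lt_0_compat; [lra | apply pow_lt; lra].
Qed.

Lemma rho_gt0 m r : 0 < m -> m / 2 < r -> 0 < rho m r.
Proof.
intros Hm Hr. unfold rho.
assert (0 < r) by lra.
assert (m / (2 * r) < 1).
{ unfold Rdiv. apply (Rmult_lt_reg_r (2 * r)); [lra|]. rewrite Rmult_assoc, Rinv_l by lra. lra. }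
assert (0 < 1 + m / (2 * r)).
{ assert (0 < m / (2 * r)) by (apply Rdiv_lt_0_compat; lra). lra. }
apply Rmult_lt_0_compat; [apply Rmult_lt_0_compat; lra|].
apply Rinv_0_lt_compat. apply Rmult_lt_0_compat; [|apply pow_lt; lra].
apply Rmult_lt_0_compat; [lra | apply pow_lt; lra].
Qed.

Lemma g0_int m J b : 0 < m -> m / 2 <= b ->
  is_RInt (g0 m J) (m / 2) b (J ^ 2 / (4 * m ^ 2) + 24 * J ^ 2 * Fr m b).
Proof.
intros Hm Hb.
assert (H : is_RInt (g0 m J) (m / 2) b ((fun t => 24 * J ^ 2 * Fr m t) b - (fun t => 24 * J ^ 2 * Fr m t) (m / 2))).
{ apply (isRd (fun t => 24 * J ^ 2 * Fr m t) (g0 m J)); rewrite Rmin_left by lra; rewrite Rmax_right by lra.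
  - intros x Hx. unfold Fr, g0. auto_derive.
    + assert (0 < 2 * x + m) by lra. apply Rgt_not_eq. repeat apply Rmult_lt_0_compat; lra.
    + field. lra.
  - intros x Hx. apply exdc. unfold g0. auto_derive.
    assert (0 < 2 * x + m) by lra. apply Rgt_not_eq. repeat apply Rmult_lt_0_compat; lra. }
replace (J ^ 2 / (4 * m ^ 2) + 24 * J ^ 2 * Fr m b) with
  ((fun t => 24 * J ^ 2 * Fr m t) b - (fun t => 24 * J ^ 2 * Fr m t) (m / 2)). exact H.
unfold Fr. field. lra.
Qed.

Lemma Fr_bounds m b : 0 < m -> 1 <= b -> Fr m b <= 0 /\ - Fr m b <= m / (12 * b).
Proof.
intros Hm Hb.
assert (E : - Fr m b = (16 * m * b ^ 3) * / (3 * (2 * b + m) ^ 6)) by (unfold Fr; field; lra).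
assert (H6 : (2 * b) ^ 6 <= (2 * b + m) ^ 6) by (apply pow_incr; lra).
assert (P6 : 0 < (2 * b) ^ 6) by (apply pow_lt; lra).
assert (P3 : 0 < b ^ 3) by (apply pow_lt; lra).
assert (b <= b ^ 3) by (simpl; nra).
assert (0 < 16 * m * b ^ 3) by (apply Rmult_lt_0_compat; lra).
assert (Hi : / (3 * (2 * b + m) ^ 6) <= / (3 * (2 * b) ^ 6)) by (apply Rinv_le_contravar; lra).
assert (0 < / (3 * (2 * b + m) ^ 6)) by (apply Rinv_0_lt_compat; lra).
split.
- assert (0 <= - Fr m b) by (rewrite E; apply Rmult_le_pos; lra). lra.
- rewrite E. apply Rle_trans with ((16 * m * b ^ 3) * / (3 * (2 * b) ^ 6)).
  + apply Rmult_le_compat_l; lra.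
  + replace ((16 * m * b ^ 3) * / (3 * (2 * b) ^ 6)) with (m / (12 * b ^ 3)) by (field; lra).
    unfold Rdiv. apply Rmult_le_compat_l; [lra|]. apply Rinv_le_contravar; lra.
Qed.

Lemma tail m J eps : 0 < m -> 0 < eps -> exists b0, m / 2 <= b0 /\ 1 <= b0 /\
  forall b, b0 <= b -> 0 <= - (24 * J ^ 2 * Fr m b) < eps.
Proof.
intros Hm He.
exists (Rmax (m / 2) (Rmax 1 (2 * J ^ 2 * m / eps + 1))).
assert (M1 := Rmax_l (m / 2) (Rmax 1 (2 * J ^ 2 * m / eps + 1))).
assert (M2 := Rmax_r (m / 2) (Rmax 1 (2 * J ^ 2 * m / eps + 1))).
assert (M3 := Rmax_l 1 (2 * J ^ 2 * m / eps + 1)).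
assert (M4 := Rmax_r 1 (2 * J ^ 2 * m / eps + 1)).
split; [lra | split; [lra|]].
intros b Hb. destruct (Fr_bounds m b Hm ltac:(lra)) as [F1 F2].
assert (0 <= J ^ 2) by apply pow2_ge_0.
split. - nra.
- assert (Hbig : 2 * J ^ 2 * m / eps < b) by lra.
  assert (0 < b) by lra.
  assert (2 * J ^ 2 * m < eps * b).
  { apply (Rmult_lt_compat_r eps) in Hbig; [|lra]. unfold Rdiv in Hbig.
    rewrite Rmult_assoc, Rinv_l in Hbig by lra. lra. }
  assert (m / (12 * b) * b = m / 12) by (field; lra).
  assert (- Fr m b * b <= m / 12).
  { rewrite <- H2. apply Rmult_le_compat_r; lra. }
  assert (- (24 * J ^ 2 * Fr m b) * b < eps * b) by nra.
  nra.
Qed.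

Lemma PJ_lb m J c f D (HD : Dspec f D) z0 x : 0 < m -> m / 2 <= x -> -1 < z0 < 1 ->
  g0 m J x + g1 m f z0 x <= PJ_integrand m J c f x.
Proof.
intros Hm Hx Hz.
assert (0 < x) by lra.
rewrite (PJ_val m J c f D HD x) by lra.
rewrite <- (g0_eq m J x Hm) by lra. unfold g1.
pose proof (rho_ge0 m x Hm Hx).
pose proof (Av_ge0 f D HD x).
pose proof (Bv_lb f D HD x z0 Hz).
assert (0 <= 2 * rho m x * x) by (apply Rmult_le_pos; lra).
assert (0 < / x ^ 2) by (apply Rinv_0_lt_compat, pow_lt; lra).
set (w := omega_tilde f x z0 ^ 2 / (1 - z0)) in *.
set (P := 2 * rho m x * x) in *.
set (i := / x ^ 2) in *.
assert (0 <= P * Av D x) by (apply Rmult_le_pos; lra).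
assert (P * (i * w) <= P * (i * Bv f D x)).
{ apply Rmult_le_compat_l; [lra|]. apply Rmult_le_compat_l; lra. }
nra.
Qed.

Lemma g1_cont m f D (HD : Dspec f D) z0 x : 0 < m -> 0 < x -> -1 < z0 < 1 -> continuous (g1 m f z0) x.
Proof.
intros Hm Hx Hz. apply exdc. unfold g1, rho, omega_tilde.
pose proof (fr f D HD x z0) as H.
assert (0 < m * / (2 * x)) by (apply Rmult_lt_0_compat; [lra | apply Rinv_0_lt_compat; lra]).
auto_derive.
repeat split; try (eexists; exact H); apply Rgt_not_eq; repeat apply Rmult_lt_0_compat; lra.
Qed.

Lemma g1_ge0 m f z0 x : 0 < m -> m / 2 <= x -> -1 < z0 < 1 -> 0 <= g1 m f z0 x.
Proof.
intros Hm Hx Hz. unfold g1. pose proof (rho_ge0 m x Hm Hx).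
apply Rmult_le_pos; [apply Rmult_le_pos; lra|].
apply Rmult_le_pos; [apply Rlt_le, Rinv_0_lt_compat, pow_lt; lra|].
apply Rmult_le_pos; [apply pow2_ge_0 | apply Rlt_le, Rinv_0_lt_compat; lra].
Qed.

Lemma ex_g1 m f D (HD : Dspec f D) z0 a b : 0 < m -> 0 < a -> a <= b -> -1 < z0 < 1 -> ex_RInt (g1 m f z0) a b.
Proof.
intros Hm Ha Hab Hz. apply exRc. rewrite Rmin_left, Rmax_right by lra.
intros x Hx. apply (g1_cont m f D HD); lra.
Qed.

Lemma key m J c f D (HD : Dspec f D) z0 b v : 0 < m -> -1 < z0 < 1 -> m / 2 <= b ->
  Defs.is_RInt (PJ_integrand m J c f) (m / 2) b v ->
  J ^ 2 / (4 * m ^ 2) + 24 * J ^ 2 * Fr m b + RInt (g1 m f z0) (m / 2) b <= v.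
Proof.
intros Hm Hz Hb Hv. apply bridge in Hv.
pose proof (is_RInt_plus _ _ _ _ _ _ (g0_int m J b Hm Hb) (RIc _ _ _ (ex_g1 m f D HD z0 (m/2) b Hm ltac:(lra) Hb Hz))) as H.
apply (isRle _ _ _ _ _ _ Hb H Hv).
intros x Hx. unfold plus; simpl. apply (PJ_lb m J c f D HD); lra.
Qed.


Lemma g1_int_ge0 m f D (HD : Dspec f D) z0 a b : 0 < m -> m / 2 <= a -> a <= b -> -1 < z0 < 1 ->
  0 <= RInt (g1 m f z0) a b.
Proof.
intros. apply RInt_ge_0; [lra | apply (ex_g1 m f D HD); lra |].
intros x Hx. apply g1_ge0; lra.
Qed.

Lemma part2 m J c f D (HD : Dspec f D) l : 0 < m ->
  improper_int (PJ_integrand m J c f) (m / 2) l -> J ^ 2 / (4 * m ^ 2) <= l.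
Proof.
intros Hm [Hex Hconv].
destruct (Rle_lt_dec (J ^ 2 / (4 * m ^ 2)) l) as [Hl|Hl]; [exact Hl|exfalso].
set (T := J ^ 2 / (4 * m ^ 2)) in *.
set (eps := (T - l) / 2).
assert (He : 0 < eps) by (unfold eps; lra).
destruct (Hconv eps He) as [B HB].
destruct (tail m J eps Hm He) as [b0 [Hb0 [Hb1 Ht]]].
set (b := Rmax B b0).
assert (B <= b) by apply Rmax_l. assert (b0 <= b) by apply Rmax_r.
destruct (Hex b ltac:(lra)) as [v Hv].
pose proof (HB b v ltac:(lra) Hv) as Hvl.
assert (Hz0 : -1 < 0 < 1) by lra.
pose proof (key m J c f D HD 0 b v Hm Hz0 ltac:(lra) Hv) as Hk.
pose proof (g1_int_ge0 m f D HD 0 (m/2) b Hm ltac:(lra) ltac:(lra) Hz0).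
pose proof (Ht b ltac:(lra)).
apply Rabs_def2 in Hvl. fold T in Hk. unfold eps in *. lra.
Qed.

Lemma cont_delta (g : R -> R) p : continuous g p -> forall eps, 0 < eps ->
  exists d, 0 < d /\ forall y, Rabs (y - p) < d -> Rabs (g y - g p) < eps.
Proof.
intros H eps He. apply continuity_pt_filterlim in H.
destruct (H eps He) as [d [Hd Hy]].
exists d. split; [exact Hd|]. intros y Hyp.
destruct (Req_dec y p) as [->|Hne].
- rewrite Rminus_diag, Rabs_R0. exact He.
- apply (Hy y). split; [split; [exact I | auto] | exact Hyp].
Qed.

Lemma zero_right (g : R -> R) p : continuous g p -> (forall y, p < y < p + 1 -> g y = 0) -> g p = 0.
Proof.
intros Hc H. destruct (Req_dec (g p) 0) as [E|E]; [exact E|exfalso].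
destruct (cont_delta g p Hc (Rabs (g p)) ltac:(apply Rabs_pos_lt; exact E)) as [d [Hd Hy]].
set (y := p + Rmin d 1 / 2).
assert (0 < Rmin d 1) by (apply Rmin_pos; lra).
pose proof (Rmin_l d 1). pose proof (Rmin_r d 1).
assert (Rabs (y - p) < d) by (unfold y; rewrite Rabs_right; lra).
pose proof (Hy y H3). rewrite (H y) in H4 by (unfold y; lra).
rewrite Rminus_0_l, Rabs_Ropp in H4. lra.
Qed.

Lemma zero_left (g : R -> R) p : continuous g p -> (forall y, p - 1 < y < p -> g y = 0) -> g p = 0.
Proof.
intros Hc H. destruct (Req_dec (g p) 0) as [E|E]; [exact E|exfalso].
destruct (cont_delta g p Hc (Rabs (g p)) ltac:(apply Rabs_pos_lt; exact E)) as [d [Hd Hy]].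
set (y := p - Rmin d 1 / 2).
assert (0 < Rmin d 1) by (apply Rmin_pos; lra).
pose proof (Rmin_l d 1). pose proof (Rmin_r d 1).
assert (Rabs (y - p) < d) by (unfold y; rewrite Rabs_left; lra).
pose proof (Hy y H3). rewrite (H y) in H4 by (unfold y; lra).
rewrite Rminus_0_l, Rabs_Ropp in H4. lra.
Qed.

Lemma interior_zero m J c f D (HD : Dspec f D) : 0 < m ->
  improper_int (PJ_integrand m J c f) (m / 2) (J ^ 2 / (4 * m ^ 2)) ->
  forall x z0, m / 2 < x -> -1 < z0 < 1 -> f x z0 = 0.
Proof.
intros Hm [Hex Hconv] x z0 Hx Hz.
destruct (Req_dec (f x z0) 0) as [E|E]; [exact E|exfalso].
assert (Hg : 0 < g1 m f z0 x).
{ unfold g1. pose proof (rho_gt0 m x Hm Hx).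
  assert (0 < 1 - z0 ^ 2) by nra.
  assert (omega_tilde f x z0 <> 0).
  { unfold omega_tilde. apply Rmult_integral_contrapositive. split; auto. apply pow_nonzero; lra. }
  apply Rmult_lt_0_compat; [apply Rmult_lt_0_compat; lra|].
  apply Rmult_lt_0_compat; [apply Rinv_0_lt_compat, pow_lt; lra|].
  apply Rmult_lt_0_compat; [apply pow2_gt_0; auto| apply Rinv_0_lt_compat; lra]. }
destruct (cont_delta _ x (g1_cont m f D HD z0 x Hm ltac:(lra) Hz) (g1 m f z0 x / 2) ltac:(lra)) as [d [Hd Hy]].
set (e := Rmin d (x - m / 2) / 2).
assert (0 < Rmin d (x - m / 2)) by (apply Rmin_pos; lra).
pose proof (Rmin_l d (x - m / 2)). pose proof (Rmin_r d (x - m / 2)).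
assert (He : 0 < e) by (unfold e; lra).
set (cc := RInt (g1 m f z0) (m / 2) (x + e)).
assert (Hc : 0 < cc).
{ unfold cc. rewrite <- (RCh _ (m / 2) (x - e) (x + e)) by (apply (ex_g1 m f D HD); unfold e in *; lra).
  pose proof (g1_int_ge0 m f D HD z0 (m / 2) (x - e) Hm ltac:(lra) ltac:(unfold e in *; lra) Hz).
  assert (0 < RInt (g1 m f z0) (x - e) (x + e)).
  { apply RInt_gt_0; [lra | |].
    - intros y Hy'. assert (Rabs (y - x) < d) by (apply Rabs_def1; unfold e in *; lra).
      pose proof (Hy y H3). apply Rabs_def2 in H4. lra.
    - intros y Hy'. apply (g1_cont m f D HD); unfold e in *; lra. }
  lra. }
set (eps := cc / 2).
assert (Heps : 0 < eps) by (unfold eps; lra).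
destruct (Hconv eps Heps) as [B HB].
destruct (tail m J eps Hm Heps) as [b0 [Hb0 [Hb1 Ht]]].
set (b := Rmax (Rmax B b0) (x + e)).
assert (Rmax B b0 <= b) by apply Rmax_l. assert (x + e <= b) by apply Rmax_r.
pose proof (Rmax_l B b0). pose proof (Rmax_r B b0).
destruct (Hex b ltac:(lra)) as [v Hv].
pose proof (HB b v ltac:(lra) Hv) as Hvl.
pose proof (key m J c f D HD z0 b v Hm Hz ltac:(lra) Hv) as Hk.
rewrite <- (RCh _ (m / 2) (x + e) b) in Hk by (apply (ex_g1 m f D HD); lra).
pose proof (g1_int_ge0 m f D HD z0 (x + e) b Hm ltac:(lra) ltac:(lra) Hz).
pose proof (Ht b ltac:(lra)).
fold cc in Hk.
apply Rabs_def2 in Hvl. unfold eps in *. lra.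
Qed.

Lemma zero_ext m f D (HD : Dspec f D) : 0 < m ->
  (forall x z, m / 2 < x -> -1 < z < 1 -> f x z = 0) ->
  forall r z, m / 2 <= r -> -1 <= z <= 1 -> f r z = 0.
Proof.
intros Hm H.
assert (H2 : forall r z, m / 2 <= r -> -1 < z < 1 -> f r z = 0).
{ intros r z Hr Hz. destruct (Rle_lt_or_eq_dec _ _ Hr) as [Hr'|<-]; [apply H; lra|].
  apply (zero_right (fun s => f s z)); [apply (cfr f D HD)|].
  intros y Hy. apply H; lra. }
intros r z Hr Hz.
destruct (Rle_lt_or_eq_dec _ _ (proj1 Hz)) as [Hz1|<-].
- destruct (Rle_lt_or_eq_dec _ _ (proj2 Hz)) as [Hz2| ->]; [apply H2; lra|].
  apply (zero_left (fun t => f r t)); [apply (cfz f D HD)|].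
  intros y Hy. apply H2; lra.
- apply (zero_right (fun t => f r t)); [apply (cfz f D HD)|].
  intros y Hy. apply H2; lra.
Qed.

Lemma deriv_zero (g : R -> R) x l d : is_derive g x l -> 0 < d ->
  (forall y, Rabs (y - x) < d -> g y = 0) -> l = 0.
Proof.
intros H Hd Hz.
assert (H2 : is_derive (fun _ : R => 0) x l).
{ apply (is_derive_ext_loc g); [|exact H].
  exists (mkposreal d Hd). intros y Hy. apply Hz.
  unfold ball in Hy; simpl in Hy. unfold AbsRing_ball, abs, minus, plus, opp in Hy; simpl in Hy. exact Hy. }
apply is_derive_Reals in H2.
exact (uniqueness_limite _ _ _ _ H2 (derivable_pt_lim_const 0 x)).
Qed.

Lemma RInt_zero (g : R -> R) : (forall z, -1 < z < 1 -> g z = 0) -> RInt g (-1) 1 = 0.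
Proof.
intros H. apply iru.
assert (H0 : is_RInt (fun _ : R => 0) (-1) 1 0).
{ pose proof (is_RInt_const (V:=R_NormedModule) (-1) 1 0) as H1.
  unfold scal in H1; simpl in H1; unfold mult in H1; simpl in H1. rewrite Rmult_0_r in H1. exact H1. }
eapply is_RInt_ext; [|exact H0].
intros z Hz. rewrite Rmin_left in Hz by lra. rewrite Rmax_right in Hz by lra. symmetry. apply H. exact Hz.
Qed.

Lemma PJ_zero m J c f D (HD : Dspec f D) x : 0 < m -> m / 2 < x ->
  (forall r z, m / 2 <= r -> -1 <= z <= 1 -> f r z = 0) ->
  PJ_integrand m J c f x = g0 m J x.
Proof.
intros Hm Hx H0.
rewrite (PJ_val m J c f D HD x) by lra.
assert (HA : Av D x = 0).
{ unfold Av. apply RInt_zero. intros z Hz.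
  rewrite (deriv_zero (fun s => f s z) x _ (x - m / 2) (fr f D HD x z)); [ring | lra |].
  intros y Hy. apply Rabs_def2 in Hy. apply H0; lra. }
assert (HB : Bv f D x = 0).
{ unfold Bv. apply RInt_zero. intros z Hz. unfold qt.
  rewrite (deriv_zero (fun t => f x t) z _ (Rmin (1 - z) (z + 1)) (fz f D HD x z)).
  - rewrite H0 by lra. ring.
  - apply Rmin_pos; lra.
  - intros y Hy. apply Rabs_def2 in Hy. pose proof (Rmin_l (1 - z) (z + 1)). pose proof (Rmin_r (1 - z) (z + 1)).
    apply H0; lra. }
rewrite HA, HB, Rplus_0_l, Rplus_0_l. apply g0_eq; lra.
Qed.

Lemma part3_back m J c f D (HD : Dspec f D) : 0 < m ->
  (forall r z, m / 2 <= r -> -1 <= z <= 1 -> f r z = 0) ->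
  improper_int (PJ_integrand m J c f) (m / 2) (J ^ 2 / (4 * m ^ 2)).
Proof.
intros Hm H0.
assert (Hi : forall b, m / 2 <= b -> Defs.is_RInt (PJ_integrand m J c f) (m / 2) b (J ^ 2 / (4 * m ^ 2) + 24 * J ^ 2 * Fr m b)).
{ intros b Hb. apply bridge. eapply is_RInt_ext; [|exact (g0_int m J b Hm Hb)].
  intros x Hx. rewrite Rmin_left in Hx by lra. rewrite Rmax_right in Hx by lra.
  symmetry. apply (PJ_zero m J c f D HD); auto; lra. }
split.
- intros b Hb. eexists. apply Hi. exact Hb.
- intros eps He. destruct (tail m J eps Hm He) as [b0 [Hb0 [Hb1 Ht]]].
  exists b0. intros b v Hb Hv.
  pose proof (Hi b ltac:(lra)) as Hv2.
  apply bridge, iru in Hv. apply bridge, iru in Hv2. rewrite Hv in Hv2. rewrite Hv2.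
  pose proof (Ht b Hb). apply Rabs_def1; lra.
Qed.


End Aux2.

Theorem mainTheorem5 (m J c : R) (f : R -> R -> R)
  (hm : 0 < m) (hf : smooth2 f) :
  (forall r, m / 2 <= r ->
     exists vA vB,
       is_RInt (fun z => partial2 (omega f J c) r z ^ 2 / (1 - z ^ 2)) (-1) 1 vA /\
       is_RInt (fun z => partial2 (omega_tilde f) r z ^ 2 / (1 - z ^ 2)) (-1) 1 vB /\
       vA = vB + 12 * J ^ 2) /\
  (forall l, improper_int (PJ_integrand m J c f) (m / 2) l ->
     J ^ 2 / (4 * m ^ 2) <= l) /\
  (improper_int (PJ_integrand m J c f) (m / 2) (J ^ 2 / (4 * m ^ 2)) <->
     (forall r z, m / 2 <= r -> -1 <= z <= 1 -> f r z = 0)).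
Proof.
destruct hf as [D [HD0 HD]].
assert (HDs : Aux.Dspec f D).
{ split; [exact HD0|]. intros i j x y. apply (proj2 (HD i j)). }
split; [|split].
- intros r _. apply (Aux.part1 f D HDs).
- intros l Hl. apply (Aux2.part2 m J c f D HDs l hm Hl).
- split.
  + intros Hi. apply (Aux2.zero_ext m f D HDs hm).
    apply (Aux2.interior_zero m J c f D HDs hm Hi).
  + apply (Aux2.part3_back m J c f D HDs hm).
Qed.
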